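(* Let $\kappa$ be a regular uncountable cardinal, $L=\{\lambda+1:\lambda<\kappa\text{ a limit ordinal}\}$, $W=\{\lambda<\kappa:\operatorname{cf}\lambda=\omega\}$, and let $I$ be the ideal generated by $I_\kappa\cup\{W\}$. Suppose $A\subseteq L\setminus\{\lambda+1:\lambda\in W\}$ and $B(A)=\{\lambda:\lambda+1\in A\}$ is stationary. Then $A\notin P(I)$.
   Context: An ideal on $\kappa$ is a family of subsets of $\kappa$ closed under subsets and finite unions, which is $<\kappa$-complete and contains all singletons; $I_\kappa=\{X\subseteq\kappa:|X|<\kappa\}$. For $A\subseteq\kappa$ and $X_\alpha\subseteq\kappa$, $\bigtriangledown_{\alpha\in A}X_\alpha=\{\xi<\kappa:\exists\alpha<\xi\,(\alpha\in A\wedge \xi\in X_\alpha)\}$. An ideal is pleasant if whenever $A$ and all $X_\alpha$ belong to it, so does $\bigtriangledown_{\alpha\in A}X_\alpha$. The pleasant closure $P(I)$ is built in stages: $P_0(I)=I$; $P_{\beta+1}(I)$ is the ideal generated by $P_\beta(I)$ together with all $\bigtriangledown_{\alpha\in T}X_\alpha$ with $T\in I$ and each $X_\alpha\in P_\beta(I)$; unions at limit stages; $P(I)=\bigcup_\beta P_\beta(I)$ (the smallest pleasant ideal containing $I$). *)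

(* Defs.v *)
(* The cardinal kappa is modelled as a type T
   carrying a strict well-order [lt] whose order type is a regular
   uncountable cardinal; subsets of kappa are predicates T -> Prop. *)

Section KappaDefs.
Variable T : Type.
Variable lt : T -> T -> Prop.

Definition le (a b : T) : Prop := lt a b \/ a = b.

Definition card_lt_kappa (X : T -> Prop) : Prop :=
  ~ exists f : T -> {x : T | X x}, forall a b, f a = f b -> a = b.

Definition unbounded (X : T -> Prop) : Prop :=
  forall a, exists x, X x /\ lt a x.

Definition regular_uncountable_cardinal : Prop :=
  (forall a, ~ lt a a) /\
  (forall a b c, lt a b -> lt b c -> lt a c) /\
  (forall a b, lt a b \/ a = b \/ lt b a) /\
  well_founded lt /\
  (* a cardinal: every proper initial segment has smaller cardinality *)
  (forall a, card_lt_kappa (fun x => lt x a)) /\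
  (~ exists f : T -> nat, forall a b, f a = f b -> a = b) /\
  (* regular: every unbounded subset has cardinality kappa *)
  (forall X, unbounded X -> ~ card_lt_kappa X).

Definition is_limit (l : T) : Prop :=
  (exists a, lt a l) /\ (forall a, lt a l -> exists b, lt a b /\ lt b l).

Definition is_succ (l s : T) : Prop :=
  lt l s /\ forall c, lt l c -> le s c.

Definition Lset (s : T) : Prop := exists l, is_limit l /\ is_succ l s.

Definition cof_omega (l : T) : Prop :=
  exists f : nat -> T,
    (forall n, lt (f n) (f (S n))) /\ (forall n, lt (f n) l) /\
    (forall a, lt a l -> exists n, lt a (f n)).

Definition Wset (l : T) : Prop := cof_omega l.

Definition Bset (A : T -> Prop) (l : T) : Prop :=
  exists s, is_succ l s /\ A s.

Definition club (C : T -> Prop) : Prop :=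
  unbounded C /\
  (forall l, is_limit l ->
     (forall a, lt a l -> exists c, C c /\ lt a c /\ lt c l) -> C l).

Definition stationary (S : T -> Prop) : Prop :=
  forall C, club C -> exists x, S x /\ C x.

Definition diag (A : T -> Prop) (X : T -> T -> Prop) (xi : T) : Prop :=
  exists a, lt a xi /\ A a /\ X a xi.

Definition is_ideal (J : (T -> Prop) -> Prop) : Prop :=
  (forall X Y, J Y -> (forall x, X x -> Y x) -> J X) /\
  (forall X Y, J X -> J Y -> J (fun x => X x \/ Y x)) /\
  (forall (D : T -> Prop) (F : T -> T -> Prop), card_lt_kappa D ->
     (forall a, D a -> J (F a)) -> J (fun x => exists a, D a /\ F a x)) /\
  (forall a, J (fun x => x = a)).

Definition gen_ideal (G : (T -> Prop) -> Prop) (X : T -> Prop) : Prop :=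
  forall J, is_ideal J -> (forall Y, G Y -> J Y) -> J X.

Definition Ikappa (X : T -> Prop) : Prop := card_lt_kappa X.

Definition Iideal : (T -> Prop) -> Prop :=
  gen_ideal (fun Y => Ikappa Y \/ (forall x, Y x <-> Wset x)).

(* P(I) = union of the stages P_beta(I); equivalently the least ideal
   containing I and closed under diagonal unions indexed by sets in I
   of families of its members. *)
Definition pleasant_closure (I : (T -> Prop) -> Prop) (X : T -> Prop) : Prop :=
  forall J, is_ideal J -> (forall Y, I Y -> J Y) ->
    (forall (A : T -> Prop) (F : T -> T -> Prop), I A ->
       (forall a, A a -> J (F a)) -> J (diag A F)) ->
    J X.

End KappaDefs.

(* Main.v *)
Require Import Defs.
From Stdlib Require Import Classical ClassicalEpsilon Lia PeanoNat ProofIrrelevance.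

Section Main.
Variable T : Type.
Variable lt : T -> T -> Prop.
Hypothesis irr : forall a, ~ lt a a.
Hypothesis trans : forall a b c, lt a b -> lt b c -> lt a c.
Hypothesis tri : forall a b, lt a b \/ a = b \/ lt b a.
Hypothesis wf : well_founded lt.
Hypothesis cardax : forall a, card_lt_kappa T (fun x => lt x a).
Hypothesis uncount : ~ exists f : T -> nat, forall a b, f a = f b -> a = b.
Hypothesis reg : forall X, unbounded T lt X -> ~ card_lt_kappa T X.

Local Notation le := (Defs.le T lt).
Local Notation cid := constructive_indefinite_description.

Lemma le_lt_trans a b c : le a b -> lt b c -> lt a c.
Proof. intros [H|H] H2; [eauto|subst; auto]. Qed.
Lemma lt_le_trans a b c : lt a b -> le b c -> lt a c.
Proof. intros H [H2|H2]; [eauto|subst; auto]. Qed.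
Lemma lt_not_le a b : lt a b -> ~ le b a.
Proof. intros H [H2|H2]; [apply (irr a); eauto| subst; apply (irr a); auto]. Qed.
Lemma not_lt_le a b : ~ lt a b -> le b a.
Proof. intro H. destruct (tri a b) as [?|[?|?]]; [contradiction|right; auto|left; auto]. Qed.
Lemma le_antisym a b : le a b -> le b a -> a = b.
Proof. intros [H|H] H2; auto. exfalso; exact (lt_not_le _ _ H H2). Qed.

Lemma sig_eq (P : T -> Prop) (u v : {x | P x}) : proj1_sig u = proj1_sig v -> u = v.
Proof. destruct u, v; simpl; intro; subst; f_equal; apply proof_irrelevance. Qed.

Lemma least_ex (P : T -> Prop) : (exists x, P x) -> exists m, P m /\ forall z, P z -> le m z.
Proof.
  intros [x Hx]. revert Hx. induction x as [x IH] using (well_founded_ind wf).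
  intro Hx. destruct (classic (exists z, lt z x /\ P z)) as [[z [Hz Pz]]|N].
  - exact (IH z Hz Pz).
  - exists x. split; [exact Hx|]. intros z Pz. apply not_lt_le. intro H; apply N; eauto.
Qed.

Lemma inhab : exists t : T, True.
Proof. apply NNPP; intro N; apply uncount; exists (fun _ => 0); intros a; exfalso; apply N; eauto. Qed.

Lemma small_bounded X : card_lt_kappa T X -> exists u, forall x, X x -> le x u.
Proof.
  intro Hs. destruct (classic (unbounded T lt X)) as [U|U].
  - exfalso; exact (reg X U Hs).
  - unfold unbounded in U. apply not_all_ex_not in U. destruct U as [a Ha]. exists a.
    intros x Xx. apply not_lt_le. intro H. apply Ha. exists x; auto.
Qed.

Lemma range_small (h : nat -> T) : card_lt_kappa T (fun y => exists n, h n = y).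
Proof.
  intros [f Hf]. apply uncount.
  exists (fun t => proj1_sig (cid _ (proj2_sig (f t)))).
  intros a b E. apply Hf. apply sig_eq. revert E.
  destruct (cid _ (proj2_sig (f a))) as [na Ha].
  destruct (cid _ (proj2_sig (f b))) as [nb Hb]. simpl. intro E.
  rewrite <- Ha, <- Hb, E. reflexivity.
Qed.

Lemma image_small (D : T -> Prop) (g : T -> T) :
  card_lt_kappa T D -> card_lt_kappa T (fun y => exists a, D a /\ g a = y).
Proof.
  intros HD [f Hf]. apply HD.
  pose (pre t := cid _ (proj2_sig (f t))).
  exists (fun t => exist D (proj1_sig (pre t)) (proj1 (proj2_sig (pre t)))).
  intros a b E. apply Hf. apply sig_eq. apply (f_equal (@proj1_sig _ _)) in E. simpl in E.
  destruct (proj2_sig (pre a)) as [_ Ga]. destruct (proj2_sig (pre b)) as [_ Gb].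
  rewrite <- Ga, <- Gb, E. reflexivity.
Qed.

Lemma incr_lt (f : nat -> T) : (forall n, lt (f n) (f (S n))) -> forall n k, (n < k)%nat -> lt (f n) (f k).
Proof.
  intros Hf n k; induction k; intro H. lia.
  destruct (Nat.eq_dec n k). subst; auto. apply trans with (f k); [apply IHk; lia | auto].
Qed.
Lemma incr_le (f : nat -> T) : (forall n, lt (f n) (f (S n))) -> forall n k, (n <= k)%nat -> le (f n) (f k).
Proof.
  intros Hf n k H. destruct (Nat.eq_dec n k); [right; subst; reflexivity | left; apply incr_lt; auto; lia].
Qed.
Lemma incr_inj (f : nat -> T) : (forall n, lt (f n) (f (S n))) -> forall n k, f n = f k -> n = k.
Proof.
  intros Hf n k E. destruct (Nat.lt_total n k) as [H|[H|H]]; auto; exfalso;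
  apply (incr_lt f Hf) in H; rewrite E in H; eapply irr; eauto.
Qed.

Lemma nomax a : exists b, lt a b.
Proof.
  apply NNPP; intro N.
  assert (Hm : forall x, le x a).
  { intro x. apply not_lt_le. intro H; apply N; exists x; exact H. }
  destruct (least_ex (fun _ => True) (ex_intro _ a I)) as [z [_ Hz]].
  assert (Hsf : forall x, exists y, (exists w, lt x w) -> lt x y /\ forall u, lt x u -> le y u).
  { intro x. destruct (classic (exists w, lt x w)) as [Hw|Hw].
    - destruct (least_ex (fun y => lt x y) Hw) as [y [Hy1 Hy2]]. exists y; auto.
    - exists x; intro; contradiction. }
  pose (sf x := proj1_sig (cid _ (Hsf x))).
  assert (Hsfp : forall x, (exists w, lt x w) -> lt x (sf x) /\ forall u, lt x u -> le (sf x) u).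
  { intro x. exact (proj2_sig (cid _ (Hsf x))). }
  pose (h n := Nat.iter n sf z).
  assert (HhS : forall n, h (S n) = sf (h n)) by reflexivity.
  assert (Cov : forall j y, le y (h j) -> exists i, h i = y).
  { induction j; intros y Hy.
    - exists 0. change (h 0) with z. apply le_antisym; [exact (Hz y I) | exact Hy].
    - destruct (classic (le y (h j))) as [H|H]. apply IHj; auto.
      assert (H0 : lt (h j) y).
      { destruct (tri (h j) y) as [?|[?|?]]; [auto| subst; exfalso; apply H; right; reflexivity
        | exfalso; apply H; left; auto]. }
      destruct (Hsfp (h j) (ex_intro _ y H0)) as [_ Hl]. exists (S j). rewrite HhS.
      apply le_antisym; [ apply Hl; auto | exact Hy ]. }
  assert (Nm : forall n, h n <> a).
  { intros n E. apply uncount.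
    assert (H : forall y, exists i, h i = y) by (intro y; apply (Cov n); rewrite E; apply Hm).
    exists (fun y => proj1_sig (cid _ (H y))).
    intros u v. destruct (cid _ (H u)) as [i Hi]. destruct (cid _ (H v)) as [k Hk].
    simpl. intro Euv. rewrite <- Hi, <- Hk, Euv. reflexivity. }
  assert (Hlt : forall n, lt (h n) a).
  { intro n; destruct (Hm (h n)); auto; exfalso; exact (Nm n H). }
  assert (Hinc : forall n, lt (h n) (h (S n))).
  { intro n. rewrite HhS. apply (Hsfp (h n) (ex_intro _ a (Hlt n))). }
  pose (phi x := match excluded_middle_informative (x = a) with
    | left _ => h 0
    | right _ => match excluded_middle_informative (exists n, h n = x) with
       | left He => h (S (proj1_sig (cid _ He)))
       | right _ => x end end).
  assert (Hphi : forall x, lt (phi x) a).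
  { intro x. unfold phi. destruct (excluded_middle_informative (x = a)). apply Hlt.
    destruct (excluded_middle_informative _). apply Hlt.
    destruct (Hm x); [auto| contradiction]. }
  assert (Hinj : forall x y, phi x = phi y -> x = y).
  { intros x y. unfold phi.
    destruct (excluded_middle_informative (x = a)) as [Ex|Ex];
    destruct (excluded_middle_informative (y = a)) as [Ey|Ey];
    [ congruence | | | ];
    repeat match goal with
    | |- context [excluded_middle_informative ?P] =>
        let H := fresh "H" in destruct (excluded_middle_informative P) as [H|H]
    | |- context [proj1_sig (cid _ ?H)] =>
        let n := fresh "n" in let En := fresh "En" in destruct (cid _ H) as [n En]; simpl
    end; intro E;
    first [ exact E
          | congruence
          | exfalso; match goal with H : ~ (exists n, _) |- _ => apply H end; eexists; eassumption
          | exfalso; match goal with H : ~ (exists n, _) |- _ => apply H end; eexists; symmetry; eassumption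
          | exfalso; apply (incr_inj h Hinc _ _) in E; discriminate
          | idtac ];
    match type of E with
     | z = sf (h ?k) => exfalso; apply (incr_inj h Hinc 0 (S k)) in E; discriminate
     | sf (h ?k) = z => exfalso; apply (incr_inj h Hinc (S k) 0) in E; discriminate
     | sf (h ?k) = sf (h ?j) => apply (incr_inj h Hinc (S k) (S j)) in E;
          injection E; intro; subst; congruence
     | sf (h ?k) = _ => exfalso; match goal with H : ~ (exists n, _) |- _ => apply H end;
          exists (S k); exact E
     | _ = sf (h ?k) => exfalso; match goal with H : ~ (exists n, _) |- _ => apply H end;
          exists (S k); symmetry; exact E
     end. }
  apply (cardax a). exists (fun x => exist _ (phi x) (Hphi x)).
  intros x y E. apply Hinj. exact (f_equal (@proj1_sig _ _) E).
Qed.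

Lemma two_bound a b : exists c, lt a c /\ lt b c.
Proof.
  destruct (tri a b) as [H|[H|H]].
  - destruct (nomax b) as [c Hc]; exists c; split; eauto.
  - subst; destruct (nomax b) as [c Hc]; exists c; split; eauto.
  - destruct (nomax a) as [c Hc]; exists c; split; eauto.
Qed.

Lemma bound_family D (g : T -> T) : card_lt_kappa T D -> exists u, forall a, D a -> lt (g a) u.
Proof.
  intro HD. destruct (small_bounded _ (image_small D g HD)) as [u0 Hu0].
  destruct (nomax u0) as [u Hu]. exists u. intros a Da.
  apply le_lt_trans with u0; auto. apply Hu0. eauto.
Qed.

Lemma sup_seq (x : nat -> T) :
  exists s, (forall n, le (x n) s) /\ (forall z, (forall n, le (x n) z) -> le s z).
Proof.
  destruct (small_bounded _ (range_small x)) as [u Hu].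
  destruct (least_ex (fun z => forall n, le (x n) z)) as [s [Hs1 Hs2]].
  - exists u. intro n. apply Hu. eauto.
  - exists s; auto.
Qed.

Lemma max_below a a' l : lt a l -> lt a' l -> exists m, le a m /\ le a' m /\ lt m l.
Proof.
  intros H1 H2. destruct (tri a a') as [H|[H|H]].
  - exists a'; split; [left; auto| split; [right; auto|auto]].
  - subst; exists a'; split; [right; auto| split; [right; auto|auto]].
  - exists a; split; [right; auto| split; [left; auto|auto]].
Qed.

Definition Delta (G : T -> T -> Prop) (x : T) := forall a, lt a x -> G a x.
Definition Eset (G : T -> T -> Prop) (b : T) (x : T) := lt b x /\ Delta G x.

Lemma delta_club G b : (forall a, club T lt (G a)) -> club T lt (Eset G b).
Proof.
  intro HG. split.
  - intro c.
    assert (Hnx : forall a y, exists z, G a z /\ lt y z).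
    { intros a' y. destruct (proj1 (HG a') y) as [z [Hz1 Hz2]]. eauto. }
    pose (nx a y := proj1_sig (cid _ (Hnx a y))).
    assert (Hnxp : forall a y, G a (nx a y) /\ lt y (nx a y)).
    { intros a y; exact (proj2_sig (cid _ (Hnx a y))). }
    assert (Hst : forall y, exists u, lt y u /\ forall a, lt a y -> lt (nx a y) u).
    { intro y. destruct (bound_family (fun a => lt a y) (fun a => nx a y) (cardax y)) as [u0 Hu0].
      destruct (two_bound u0 y) as [u [Hu1 Hu2]]. exists u; split; auto.
      intros a Ha. apply trans with u0; [apply (Hu0 a Ha)|auto]. }
    pose (st y := proj1_sig (cid _ (Hst y))).
    assert (Hstp : forall y, lt y (st y) /\ forall a, lt a y -> lt (nx a y) (st y)).
    { intro y; exact (proj2_sig (cid _ (Hst y))). }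
    destruct (two_bound b c) as [x0 [Hb0 Hc0]].
    pose (xs n := Nat.iter n st x0).
    assert (HxS : forall n, xs (S n) = st (xs n)) by reflexivity.
    assert (Hinc : forall n, lt (xs n) (xs (S n))) by (intro n; rewrite HxS; apply Hstp).
    destruct (sup_seq xs) as [s [Hs1 Hs2]].
    assert (Hbelow : forall n, lt (xs n) s) by (intro n; apply lt_le_trans with (xs (S n)); auto).
    assert (Hcof : forall a, lt a s -> exists n, lt a (xs n)).
    { intros a Ha. apply NNPP; intro N.
      assert (forall n, le (xs n) a) by (intro n; apply not_lt_le; intro; apply N; eauto).
      apply (lt_not_le _ _ Ha). apply Hs2; auto. }
    assert (Hlim : is_limit T lt s).
    { split. exists (xs 0); auto. intros a Ha. destruct (Hcof a Ha) as [n Hn]. exists (xs n); auto. }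
    exists s. split; [split|].
    + exact (trans _ _ _ Hb0 (Hbelow 0)).
    + intros a Ha. destruct (Hcof a Ha) as [n Hn]. apply (proj2 (HG a) s Hlim).
      intros a' Ha'. destruct (Hcof a' Ha') as [m Hm'].
      exists (nx a (xs (Nat.max n m))). split; [apply Hnxp|]. split.
      * assert (lt a' (xs (Nat.max n m))).
        { apply lt_le_trans with (xs m); [auto| apply incr_le; auto; lia]. }
        apply trans with (xs (Nat.max n m)); auto. apply Hnxp.
      * apply trans with (xs (S (Nat.max n m))); [|auto]. rewrite HxS. apply Hstp.
        apply lt_le_trans with (xs n); [auto | apply incr_le; auto; lia].
    + exact (trans _ _ _ Hc0 (Hbelow 0)).
  - intros l Hl Hcf. pose proof Hl as [[a0 Ha0] Hl2]. split.
    + destruct (Hcf a0 Ha0) as [c' [[Hbc _] [_ Hc']]]. apply trans with c'; auto.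
    + intros a Ha. apply (proj2 (HG a) l Hl). intros a' Ha'.
      destruct (max_below a a' l Ha Ha') as [m [Hm1 [Hm2 Hm3]]].
      destruct (Hcf m Hm3) as [c' [[_ HD] [Hmc Hcl]]].
      exists c'. split; [apply HD; eapply le_lt_trans; eauto|]. split; auto.
      eapply le_lt_trans; eauto.
Qed.

Lemma full_club : club T lt (fun _ => True).
Proof. split; [intro a; destruct (nomax a) as [b Hb]; eauto | auto]. Qed.

Definition Kset (X : T -> Prop) := exists d, forall x, X x -> Wset T lt x \/ le x d.

Lemma K_ideal : is_ideal T Kset.
Proof.
  split; [|split; [|split]].
  - intros X Y [d Hd] Hs. exists d; auto.
  - intros X Y [d1 H1] [d2 H2]. destruct (two_bound d1 d2) as [c [C1 C2]]. exists c.
    intros x [Hx|Hx]; [destruct (H1 x Hx)|destruct (H2 x Hx)]; auto; right; left; eapply le_lt_trans; eauto.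
  - intros D F HD HF.
    assert (Hc : forall a, exists d, D a -> forall x, F a x -> Wset T lt x \/ le x d).
    { intro a. destruct (classic (D a)) as [Da|Da].
      destruct (HF a Da) as [d Hd]. exists d; auto. exists a; intro; contradiction. }
    pose (dd a := proj1_sig (cid _ (Hc a))).
    destruct (bound_family D dd HD) as [u Hu]. exists u. intros x [a [Da Fx]].
    destruct (proj2_sig (cid _ (Hc a)) Da x Fx) as [?|Hle]; auto. right; left.
    eapply le_lt_trans; [exact Hle| apply (Hu a Da)].
  - intro a. exists a. intros x ->. right; right; reflexivity.
Qed.

Lemma I_K Y : Iideal T lt Y -> Kset Y.
Proof.
  intro H. apply H. apply K_ideal. intros Z [Hs|Hw].
  - destruct (small_bounded Z Hs) as [u Hu]; exists u; auto.
  - destruct inhab as [t _]. exists t. intros x Hx; left; apply Hw; auto.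
Qed.

Definition Jset (X : T -> Prop) := exists (G : T -> T -> Prop) (b : T),
  (forall a, club T lt (G a)) /\
  forall l s, lt b l -> Delta G l -> ~ Wset T lt l -> is_succ T lt l s -> ~ X s.

Lemma succ_notW l s : is_succ T lt l s -> ~ Wset T lt s.
Proof.
  intros [Hls Hmin] [f [Hf1 [Hf2 Hf3]]]. destruct (Hf3 l Hls) as [n Hn].
  apply (lt_not_le _ _ (Hf2 n)). apply Hmin; auto.
Qed.

Lemma J_ideal : is_ideal T Jset.
Proof.
  split; [|split; [|split]].
  - intros X Y [G [b [HG H]]] Hs. exists G, b; split; auto.
    intros l s H1 H2 H3 H4 Xs. exact (H l s H1 H2 H3 H4 (Hs s Xs)).
  - intros X Y [G1 [b1 [HG1 H1]]] [G2 [b2 [HG2 H2]]].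
    destruct (nomax b1) as [c Hc].
    exists (fun a => if excluded_middle_informative (a = b1) then Eset G1 b1 else Eset G2 b2), c. split.
    + intro a. destruct (excluded_middle_informative (a = b1)); apply delta_club; auto.
    + intros l s Hcl HD HW Hsucc [Xs|Ys].
      * assert (E : Eset G1 b1 l).
        { generalize (HD b1 (trans _ _ _ Hc Hcl)).
          destruct (excluded_middle_informative (b1 = b1)); [auto|congruence]. }
        destruct E as [E1 E2]. exact (H1 l s E1 E2 HW Hsucc Xs).
      * assert (E : Eset G2 b2 l).
        { generalize (HD c Hcl).
          destruct (excluded_middle_informative (c = b1)) as [e|]; [|auto].
          subst; exfalso; exact (irr _ Hc). }
        destruct E as [E1 E2]. exact (H2 l s E1 E2 HW Hsucc Ys).
  - intros D F HD HF.
    assert (Hc : forall a, exists p : (T -> T -> Prop) * T, D a ->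
      (forall a', club T lt (fst p a')) /\
      forall l s, lt (snd p) l -> Delta (fst p) l -> ~ Wset T lt l -> is_succ T lt l s -> ~ F a s).
    { intro a. destruct (classic (D a)) as [Da|Da].
      destruct (HF a Da) as [G [b H]]. exists (G, b); auto.
      exists (fun _ _ => True, a); intro; contradiction. }
    pose (pp a := proj1_sig (cid _ (Hc a))).
    assert (Hpp : forall a, D a ->
      (forall a', club T lt (fst (pp a) a')) /\
      forall l s, lt (snd (pp a)) l -> Delta (fst (pp a)) l -> ~ Wset T lt l -> is_succ T lt l s -> ~ F a s).
    { intros a; exact (proj2_sig (cid _ (Hc a))). }
    destruct (small_bounded D HD) as [d Hd].
    exists (fun a => if excluded_middle_informative (D a) then Eset (fst (pp a)) (snd (pp a))
                     else (fun _ => True)), d. split.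
    + intro a. destruct (excluded_middle_informative (D a)) as [Da|];
      [apply delta_club; apply (Hpp a Da) | apply full_club].
    + intros l s Hdl HDl HW Hs [a [Da Fas]].
      assert (E : Eset (fst (pp a)) (snd (pp a)) l).
      { generalize (HDl a (le_lt_trans _ _ _ (Hd a Da) Hdl)).
        destruct (excluded_middle_informative (D a)); [auto| contradiction]. }
      destruct E as [E1 E2]. exact (proj2 (Hpp a Da) l s E1 E2 HW Hs Fas).
  - intros a. exists (fun _ _ => True), a. split; [intro; apply full_club|].
    intros l s Hal _ _ [Hls _] Es. subst s. apply (irr a). apply trans with l; auto.
Qed.

Lemma I_J Y : Iideal T lt Y -> Jset Y.
Proof.
  intro H. apply H; [apply J_ideal|]. intros Z [Hs|Hw].
  - destruct (small_bounded Z Hs) as [u Hu]. exists (fun _ _ => True), u.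
    split; [intro; apply full_club|]. intros l s Hul _ _ [Hls _] Zs.
    apply (lt_not_le _ _ (trans _ _ _ Hul Hls)). apply Hu; auto.
  - destruct inhab as [t _]. exists (fun _ _ => True), t. split; [intro; apply full_club|].
    intros l s _ _ _ Hs Zs. apply (succ_notW l s Hs). apply Hw; auto.
Qed.

Lemma J_diag A' F : Iideal T lt A' -> (forall a, A' a -> Jset (F a)) -> Jset (diag T lt A' F).
Proof.
  intros HA HF. destruct (I_K A' HA) as [d0 Hd0].
  assert (Hc : forall a, exists p : (T -> T -> Prop) * T, A' a ->
    (forall a', club T lt (fst p a')) /\
    forall l s, lt (snd p) l -> Delta (fst p) l -> ~ Wset T lt l -> is_succ T lt l s -> ~ F a s).
  { intro a. destruct (classic (A' a)) as [Da|Da].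
    destruct (HF a Da) as [G [b H]]. exists (G, b); auto.
    exists (fun _ _ => True, a); intro; contradiction. }
  pose (pp a := proj1_sig (cid _ (Hc a))).
  assert (Hpp : forall a, A' a ->
    (forall a', club T lt (fst (pp a) a')) /\
    forall l s, lt (snd (pp a)) l -> Delta (fst (pp a)) l -> ~ Wset T lt l -> is_succ T lt l s -> ~ F a s).
  { intros a; exact (proj2_sig (cid _ (Hc a))). }
  exists (fun a => if excluded_middle_informative (A' a) then Eset (fst (pp a)) (snd (pp a))
                   else (fun _ => True)), d0. split.
  - intro a. destruct (excluded_middle_informative (A' a)) as [Da|];
    [apply delta_club; apply (Hpp a Da) | apply full_club].
  - intros l s Hdl HDl HW Hs [a [Has [Aa Fas]]].
    destruct (tri a l) as [Hal|[Eal|Hla]].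
    + assert (E : Eset (fst (pp a)) (snd (pp a)) l).
      { generalize (HDl a Hal).
        destruct (excluded_middle_informative (A' a)); [auto| contradiction]. }
      destruct E as [E1 E2]. exact (proj2 (Hpp a Aa) l s E1 E2 HW Hs Fas).
    + subst a. destruct (Hd0 l Aa) as [Wl|Hle]; [contradiction| exact (lt_not_le _ _ Hdl Hle)].
    + exact (lt_not_le _ _ Has (proj2 Hs a Hla)).
Qed.

Lemma main_sec (A : T -> Prop)
  (HA : forall x, A x ->
          Lset T lt x /\ ~ (exists l, Wset T lt l /\ is_succ T lt l x))
  (HB : stationary T lt (Bset T lt A)) :
  ~ pleasant_closure T lt (Iideal T lt) A.
Proof.
  intro HP. assert (HJ : Jset A).
  { apply HP. apply J_ideal. intros Y HY; apply I_J; auto. intros A' F HA' HF; apply J_diag; auto. }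
  destruct HJ as [G [b [HG H]]].
  destruct (HB _ (delta_club G b HG)) as [l [[s [Hs As]] [Hbl HDl]]].
  apply (H l s Hbl HDl); auto. intro Wl. apply (proj2 (HA s As)). exists l; auto.
Qed.

End Main.

Theorem theorem3p13 (T : Type) (lt : T -> T -> Prop)
  (Hk : regular_uncountable_cardinal T lt)
  (A : T -> Prop)
  (HA : forall x, A x ->
          Lset T lt x /\ ~ (exists l, Wset T lt l /\ is_succ T lt l x))
  (HB : stationary T lt (Bset T lt A)) :
  ~ pleasant_closure T lt (Iideal T lt) A.
Proof.
  destruct Hk as (irr & trans & tri & wf & cardax & unc & reg).
  eapply main_sec; eauto.
Qed.
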